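(* Let $(\boldsymbol A,\mathcal S)$ be a data pair and $\boldsymbol M$, $\rho$, $d_\rho$ as in the context. Then (i) for all $z\in\mathbb H$, \[ \|\boldsymbol M(z)\|_2\le\frac{1}{d_\rho(z)},\qquad (\operatorname{Im}z)\|\boldsymbol M(z)^{-1}\|_2^{-2}\,1\le\operatorname{Im}\boldsymbol M(z)\le\frac{\operatorname{Im}z}{d_\rho(z)^2}\,1,\qquad \|\boldsymbol M(z)^{-1}\|_2\le|z|+\|\boldsymbol A\|_2+\|\mathcal S\|\,\|\boldsymbol M(z)\|_2; \] (ii) for all $z\in\mathbb H$, $\rho(z)\le\dfrac{\operatorname{Im}z}{\pi d_\rho(z)^2}$.
   Context: $\mathbb H=\{w\in\mathbb C:\operatorname{Im}w>0\}$. On $\mathbb C^{n\times n}$: $\langle\boldsymbol R,\boldsymbol T\rangle=\frac1n\operatorname{Tr}(\boldsymbol R^*\boldsymbol T)$, $\langle\boldsymbol R\rangle=\frac1n\operatorname{Tr}\boldsymbol R$, $\|\cdot\|_2$ the operator norm induced by the Euclidean norm, $\|\mathcal S\|$ the operator norm of a linear map $\mathcal S$ on $\mathbb C^{n\times n}$ induced by $\|\cdot\|_2$; inequalities between Hermitian matrices are in the positive semidefinite order. A data pair $(\boldsymbol A,\mathcal S)$: $\boldsymbol A\in\mathbb C^{n\times n}$ with $\operatorname{Im}\boldsymbol A=\frac1{2i}(\boldsymbol A-\boldsymbol A^* )\le0$, and $\mathcal S$ linear, self-adjoint w.r.t. $\langle\cdot,\cdot\rangle$, positivity preserving. $\boldsymbol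 M(z)$ is the unique solution of $-\boldsymbol M(z)^{-1}=z1-\boldsymbol A+\mathcal S[\boldsymbol M(z)]$ with positive definite imaginary part; it has the representation $\boldsymbol M(z)=\int\frac{\boldsymbol V(d\tau)}{\tau-z}$ with a unique positive semidefinite matrix-valued measure $\boldsymbol V$, $\boldsymbol V(\mathbb R)=1$. The self-consistent density of states is $\rho(d\tau)=\frac1n\operatorname{Tr}\boldsymbol V(d\tau)$, its harmonic extension is $\rho(z)=\frac1\pi\langle\operatorname{Im}\boldsymbol M(z)\rangle$, and $d_\rho(z)=\operatorname{dist}(z,\operatorname{supp}\rho)$. *)

(* Defs.v *)
From HB Require Import structures.
From mathcomp Require Import all_boot all_order all_algebra.
From mathcomp Require Import all_classical all_reals all_analysis.
From mathcomp Require Import complex.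
Set Implicit Arguments. Unset Strict Implicit. Unset Printing Implicit Defensive.
Import Order.TTheory GRing.Theory.
Local Open Scope ring_scope.
Local Open Scope classical_set_scope.

Section Defs.
Variables (R : realType) (n : nat).
Local Notation C := R[i].
Local Notation Mx := 'M[C]_n.

Definition rC (r : R) : C := Complex r 0.
Definition iC : C := Complex 0 1.

Definition mxstar p q (X : 'M[C]_(p, q)) : 'M[C]_(q, p) := map_mx (@conjc R) X^T.

Definition qform (X : Mx) (x : 'cV[C]_n) : C := (mxstar x *m X *m x) 0 0.

(* positive semidefinite / positive definite Hermitian matrices;
   the order on C is the standard partial order (0 <= c iff c real, >= 0) *)
Definition hermitian (X : Mx) : Prop := mxstar X = X.
Definition psd (X : Mx) : Prop := hermitian X /\ forall x, 0 <= qform X x.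
Definition posdef (X : Mx) : Prop :=
  hermitian X /\ forall x, x != 0 -> 0 < qform X x.
Definition mxle (X Y : Mx) : Prop := psd (Y - X).

Definition ImM (X : Mx) : Mx := (2%:R * iC)^-1 *: (X - mxstar X).

Definition mxinner (X Y : Mx) : C := (n%:R)^-1 * \tr (mxstar X *m Y).
Definition mxavg (X : Mx) : C := (n%:R)^-1 * \tr X.

Definition vnorm (x : 'cV[C]_n) : R :=
  Num.sqrt (\sum_i (complex.Re (x i 0) ^+ 2 + complex.Im (x i 0) ^+ 2)).
Definition opnorm (X : Mx) : R :=
  sup [set vnorm (X *m x) | x in [set x | vnorm x <= 1]].
Definition opnormS (S : Mx -> Mx) : R :=
  sup [set opnorm (S X) | X in [set X | opnorm X <= 1]].

Definition data_pair (A : Mx) (S : {linear Mx -> Mx}) : Prop :=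
  mxle (ImM A) 0 /\
  (forall X Y, mxinner X (S Y) = mxinner (S X) Y) /\
  (forall X, psd X -> psd (S X)).

Definition solves_MDE (A : Mx) (S : Mx -> Mx) (M : C -> Mx) : Prop :=
  forall z : C, 0 < complex.Im z ->
    [/\ M z \in unitmx,
        - invmx (M z) = z%:M - A + S (M z)
      & posdef (ImM (M z))].

Definition cintegral (mu : {measure set R -> \bar R}) (f : R -> C) : C :=
  rC (Rintegral mu setT (fun t => complex.Re (f t)))
  + iC * rC (Rintegral mu setT (fun t => complex.Im (f t))).

(* V : Borel sets -> n x n matrices is a positive semidefinite
   matrix-valued measure with M(z) = \int V(dt)/(t - z) on H: for each vector
   x, B |-> x^star V(B) x is a finite (nonnegative) measure mu_x on the Borel sets
   of R, and x^star M(z) x = \int mu_x(dt)/(t - z).  (Quadratic forms determine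
   complex matrices, so this is the entrywise definition written out.) *)
Definition matrix_measure_repr (V : set R -> Mx) (M : C -> Mx) : Prop :=
  forall x : 'cV[C]_n, exists mu : {measure set R -> \bar R},
    (forall B, measurable B ->
       psd (V B) /\ complex.Im (qform (V B) x) = 0 /\
       mu B = (complex.Re (qform (V B) x))%:E) /\
    (forall z : C, 0 < complex.Im z ->
       qform (M z) x = cintegral mu (fun t => (rC t - z)^-1)).

Definition rho_meas (V : set R -> Mx) (B : set R) : R :=
  complex.Re (mxavg (V B)).

Definition supp_rho (V : set R -> Mx) : set R :=
  [set t | forall e : R, 0 < e -> 0 < rho_meas V [set s | t - e < s < t + e]].

Definition d_rho (V : set R -> Mx) (z : C) : R :=
  inf [set Normc.normc (z - rC t) | t in supp_rho V].

Definition rho_harm (M : C -> Mx) (z : C) : R :=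
  pi^-1 * complex.Re (mxavg (ImM (M z))).

End Defs.

(* Main.v *)
Require Import Defs.
From HB Require Import structures.
From mathcomp Require Import all_boot all_order all_algebra.
From mathcomp Require Import all_classical all_reals all_analysis.
From mathcomp Require Import complex.
From mathcomp Require Import ring lra.
Import Order.TTheory GRing.Theory Num.Theory.
Import numFieldNormedType.Exports.
Import Defs.
Local Open Scope ring_scope.
Local Open Scope classical_set_scope.
Set Implicit Arguments. Unset Strict Implicit. Unset Printing Implicit Defensive.
Section CBasics.
Variable R : realType.
Local Notation C := R[i].
Local Notation Re := (@complex.Re R).
Local Notation Im := (@complex.Im R).
Local Notation cj := (@conjc R).

Lemma ReD (x y : C) : Re (x + y) = Re x + Re y. Proof. by case: x y => a b [c d]. Qed.
Lemma ImD (x y : C) : Im (x + y) = Im x + Im y. Proof. by case: x y => a b [c d]. Qed.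
Lemma ReN (x : C) : Re (- x) = - Re x. Proof. by case: x. Qed.
Lemma ImN (x : C) : Im (- x) = - Im x. Proof. by case: x. Qed.
Lemma ReB (x y : C) : Re (x - y) = Re x - Re y. Proof. by rewrite ReD ReN. Qed.
Lemma ImB (x y : C) : Im (x - y) = Im x - Im y. Proof. by rewrite ImD ImN. Qed.
Lemma ReMul (x y : C) : Re (x * y) = Re x * Re y - Im x * Im y.
Proof. by case: x y => a b [c d]. Qed.
Lemma ImMul (x y : C) : Im (x * y) = Re x * Im y + Im x * Re y.
Proof. by case: x y => a b [c d]. Qed.
Lemma ImV (x : C) : Im (x^-1) = - Im x / (Re x ^+ 2 + Im x ^+ 2).
Proof. by case: x => a b /=; rewrite mulNr. Qed.
Lemma Re0 : Re 0 = 0. Proof. by []. Qed.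
Lemma Im0 : Im 0 = 0. Proof. by []. Qed.
Lemma Re_rC (r : R) : Re (rC r) = r. Proof. by []. Qed.
Lemma Im_rC (r : R) : Im (rC r) = 0. Proof. by []. Qed.
Lemma Re_cj x : Re (cj x) = Re x. Proof. by case: x. Qed.
Lemma Im_cj x : Im (cj x) = - Im x. Proof. by case: x. Qed.
Lemma rCD a b : rC (a + b) = rC a + rC b :> C.
Proof. by apply/eqP; rewrite eq_complex /= addr0 !eqxx. Qed.
Lemma rCN a : rC (- a) = - rC a :> C.
Proof. by apply/eqP; rewrite eq_complex /= oppr0 !eqxx. Qed.
Lemma rCB a b : rC (a - b) = rC a - rC b :> C. Proof. by rewrite rCD rCN. Qed.
Lemma rCM a b : rC (a * b) = rC a * rC b :> C.
Proof. by apply/eqP; rewrite eq_complex /= !mulr0 mul0r subr0 addr0 !eqxx. Qed.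
Lemma rC0 : rC 0 = 0 :> C. Proof. by []. Qed.
Lemma rC1 : rC 1 = 1 :> C. Proof. by []. Qed.
Lemma rC_nat k : rC k%:R = k%:R :> C.
Proof. elim: k => [//|k IH]; by rewrite -addn1 !natrD rCD IH. Qed.
Lemma rC_sum (I : Type) (r : seq I) (P : pred I) (F : I -> R) :
  rC (\sum_(i <- r | P i) F i) = \sum_(i <- r | P i) rC (F i).
Proof. by elim/big_rec2: _ => [//|i a b _ <-]; rewrite rCD. Qed.
Lemma Re_sum (I : Type) (r : seq I) (P : pred I) (F : I -> C) :
  Re (\sum_(i <- r | P i) F i) = \sum_(i <- r | P i) Re (F i).
Proof. by elim/big_rec2: _ => [//|i a b _ <-]; rewrite ReD. Qed.
Lemma Im_sum (I : Type) (r : seq I) (P : pred I) (F : I -> C) :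
  Im (\sum_(i <- r | P i) F i) = \sum_(i <- r | P i) Im (F i).
Proof. by elim/big_rec2: _ => [//|i a b _ <-]; rewrite ImD. Qed.
Lemma cj_sum (I : Type) (r : seq I) (P : pred I) (F : I -> C) :
  cj (\sum_(i <- r | P i) F i) = \sum_(i <- r | P i) cj (F i).
Proof. exact: rmorph_sum. Qed.
Lemma cj_rC (r : R) : cj (rC r) = rC r. Proof. by rewrite /rC /= oppr0. Qed.
Lemma cjK (x : C) : cj (cj x) = x. Proof. exact: conjcK. Qed.
Lemma cjD (x y : C) : cj (x + y) = cj x + cj y. Proof. exact: rmorphD. Qed.
Lemma cjN (x : C) : cj (- x) = - cj x. Proof. exact: rmorphN. Qed.
Lemma cjB (x y : C) : cj (x - y) = cj x - cj y. Proof. exact: rmorphB. Qed.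
Lemma cjM (x y : C) : cj (x * y) = cj x * cj y. Proof. exact: rmorphM. Qed.
Lemma cj0 : cj 0 = 0. Proof. exact: rmorph0. Qed.
Lemma cj1 : cj 1 = 1. Proof. exact: rmorph1. Qed.

Lemma lec_rC a b : (rC a <= rC b :> C) = (a <= b).
Proof. by rewrite lecE /= eqxx. Qed.
Lemma ltc_rC a b : (rC a < rC b :> C) = (a < b).
Proof. by rewrite ltcE /= eqxx. Qed.
Lemma lec0E (x : C) : (0 <= x) = (Im x == 0) && (0 <= Re x).
Proof. by rewrite lecE eq_sym. Qed.
Lemma real_rC (x : C) : Im x = 0 -> x = rC (Re x).
Proof. by case: x => a b /= ->. Qed.
Lemma cj_real (x : C) : cj x = x -> Im x = 0.
Proof.
case: x => a b /= /eqP; rewrite eq_complex /= => /andP[_ /eqP h].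
lra.
Qed.

Lemma normc_ge0 (x : C) : 0 <= Normc.normc x.
Proof. by case: x => a b /=; rewrite sqrtr_ge0. Qed.
Lemma normc_sq (x : C) : Normc.normc x ^+ 2 = Re x ^+ 2 + Im x ^+ 2.
Proof. by case: x => a b /=; rewrite sqr_sqrtr // addr_ge0 // sqr_ge0. Qed.
Lemma cjM_self (x : C) : cj x * x = rC (Normc.normc x ^+ 2).
Proof.
rewrite normc_sq; case: x => a b; apply/eqP; rewrite eq_complex /=.
apply/andP; split; apply/eqP; ring.
Qed.
Lemma Re_le_normc (x : C) : `|Re x| <= Normc.normc x.
Proof.
rewrite -(ger0_norm (normc_ge0 x)) -ler_sqr ?normr_ge0 // !real_normK ?num_real //.
by rewrite normc_sq lerDl sqr_ge0.
Qed.
Lemma Im_le_normc (x : C) : `|Im x| <= Normc.normc x.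
Proof.
rewrite -(ger0_norm (normc_ge0 x)) -ler_sqr ?normr_ge0 // !real_normK ?num_real //.
by rewrite normc_sq lerDr sqr_ge0.
Qed.
Lemma normc_rC (r : R) : Normc.normc (rC r) = `|r|.
Proof. by rewrite /= expr0n /= addr0 sqrtr_sqr. Qed.
Lemma normc_cj (x : C) : Normc.normc (cj x) = Normc.normc x.
Proof. by case: x => a b /=; rewrite sqrrN. Qed.
Lemma normc_sum (I : Type) (r : seq I) (P : pred I) (F : I -> C) :
  Normc.normc (\sum_(i <- r | P i) F i) <= \sum_(i <- r | P i) Normc.normc (F i).
Proof.
elim/big_rec2: _ => [|i a b _ h]; first by rewrite Normc.normc0.
by rewrite (le_trans (le_normcD _ _)) // lerD2l.
Qed.
End CBasics.
Section MxBasics.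
Variable R : realType.
Local Notation C := R[i].
Local Notation Re := (@complex.Re R).
Local Notation Im := (@complex.Im R).
Local Notation cj := (@conjc R).

Lemma mxstarE p q (X : 'M[C]_(p, q)) i j : mxstar X i j = cj (X j i).
Proof. by rewrite /mxstar !mxE. Qed.
Lemma mxstarK p q (X : 'M[C]_(p, q)) : mxstar (mxstar X) = X.
Proof. by apply/matrixP => i j; rewrite !mxstarE cjK. Qed.
Lemma mxstarD p q (X Y : 'M[C]_(p, q)) : mxstar (X + Y) = mxstar X + mxstar Y.
Proof. by apply/matrixP => i j; rewrite !(mxstarE, mxE) cjD. Qed.
Lemma mxstarN p q (X : 'M[C]_(p, q)) : mxstar (- X) = - mxstar X.
Proof. by apply/matrixP => i j; rewrite !(mxstarE, mxE) cjN. Qed.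
Lemma mxstarB p q (X Y : 'M[C]_(p, q)) : mxstar (X - Y) = mxstar X - mxstar Y.
Proof. by rewrite mxstarD mxstarN. Qed.
Lemma mxstarZ p q (c : C) (X : 'M[C]_(p, q)) : mxstar (c *: X) = cj c *: mxstar X.
Proof. by apply/matrixP => i j; rewrite !(mxstarE, mxE) cjM. Qed.
Lemma mxstarM p q r (X : 'M[C]_(p, q)) (Y : 'M[C]_(q, r)) :
  mxstar (X *m Y) = mxstar Y *m mxstar X.
Proof.
apply/matrixP => i j; rewrite !(mxstarE, mxE) cj_sum; apply: eq_bigr => k _.
by rewrite !mxstarE cjM mulrC.
Qed.
Lemma mxstar_scalar m (c : C) : mxstar (c%:M : 'M[C]_m) = (cj c)%:M.
Proof.
apply/matrixP => i j; rewrite !(mxstarE, mxE) eq_sym.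
by case: (i == j); rewrite ?cj0 ?mulr1n ?mulr0n.
Qed.

Variable n : nat.
Local Notation Mx := 'M[C]_n.
Local Notation cv := 'cV[C]_n.
Implicit Types (X Y : Mx) (x u v : cv).

Definition dotv (u v : cv) : C := (mxstar u *m v) 0 0.
Lemma dotvE u v : dotv u v = \sum_i cj (u i 0) * v i 0.
Proof. by rewrite /dotv mxE; apply: eq_bigr => i _; rewrite mxstarE. Qed.
Lemma cj_dotv u v : cj (dotv u v) = dotv v u.
Proof. by rewrite !dotvE cj_sum; apply: eq_bigr => i _; rewrite cjM cjK mulrC. Qed.
Lemma qformE X x : qform X x = dotv x (X *m x).
Proof. by rewrite /qform /dotv mulmxA. Qed.
Lemma qform_star X x : qform (mxstar X) x = cj (qform X x).
Proof.
have -> : qform (mxstar X) x = dotv (X *m x) x by rewrite /qform /dotv mxstarM.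
by rewrite -cj_dotv -qformE.
Qed.

Lemma sqv_ge0 (v : cv) : 0 <= \sum_i (Re (v i 0) ^+ 2 + Im (v i 0) ^+ 2).
Proof. by apply: sumr_ge0 => i _; rewrite addr_ge0 ?sqr_ge0. Qed.
Lemma vnorm_ge0 v : 0 <= vnorm v.
Proof. by rewrite /vnorm sqrtr_ge0. Qed.
Lemma vnorm_sq v : vnorm v ^+ 2 = \sum_i Normc.normc (v i 0) ^+ 2.
Proof.
rewrite /vnorm sqr_sqrtr ?sqv_ge0 //; apply: eq_bigr => i _; by rewrite normc_sq.
Qed.
Lemma dotvv v : dotv v v = rC (vnorm v ^+ 2).
Proof. by rewrite dotvE vnorm_sq rC_sum; apply: eq_bigr => i _; rewrite cjM_self. Qed.

Lemma qformD X Y x : qform (X + Y) x = qform X x + qform Y x.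
Proof. by rewrite /qform mulmxDr mulmxDl mxE. Qed.
Lemma qformN X x : qform (- X) x = - qform X x.
Proof. by rewrite /qform mulmxN mulNmx mxE. Qed.
Lemma qformB X Y x : qform (X - Y) x = qform X x - qform Y x.
Proof. by rewrite qformD qformN. Qed.
Lemma qformZ c X x : qform (c *: X) x = c * qform X x.
Proof. by rewrite /qform -scalemxAr -scalemxAl mxE. Qed.
Lemma qform_scalar c x : qform (c%:M : Mx) x = c * rC (vnorm x ^+ 2).
Proof. by rewrite /qform -mulmxA mul_scalar_mx -scalemxAr mxE -/(dotv x x) dotvv. Qed.
Lemma qform1 x : qform (1%:M : Mx) x = rC (vnorm x ^+ 2).
Proof. by rewrite qform_scalar mul1r. Qed.
Lemma qform_real_herm X x : hermitian X -> qform X x = rC (Re (qform X x)).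
Proof.
move=> hX; apply: real_rC; apply: cj_real; by rewrite -qform_star hX.
Qed.
Lemma qform_ImM X x : qform (ImM X) x = rC (Im (qform X x)).
Proof.
rewrite /ImM qformZ qformB qform_star.
have h2 : (2%:R * iC R : C) != 0.
  rewrite mulf_eq0 negb_or pnatr_eq0 /=; apply/negP => /eqP h.
  by have := congr1 (@complex.Im R) h; rewrite /= => /eqP; rewrite oner_eq0.
apply: (mulfI h2); rewrite mulrA mulfV // mul1r.
case: (qform X x) => a b /=; apply/eqP; rewrite eq_complex /=.
apply/andP; split; apply/eqP; ring.
Qed.

Lemma herm_ImM X : hermitian (ImM X).
Proof.
rewrite /hermitian /ImM mxstarZ mxstarB mxstarK.
have -> : cj (2%:R * iC R)^-1 = - (2%:R * iC R)^-1.
  rewrite conjc_inv cjM conjc_nat.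
  have -> : cj (iC R) = - iC R by apply/eqP; rewrite eq_complex /= oppr0 !eqxx.
  by rewrite mulrN invrN.
by rewrite scaleNr -scalerN opprB.
Qed.
Lemma herm_rC_scalar (r : R) : hermitian ((rC r)%:M : Mx).
Proof. by rewrite /hermitian mxstar_scalar cj_rC. Qed.
Lemma herm_add X Y : hermitian X -> hermitian Y -> hermitian (X + Y : Mx).
Proof. by rewrite /hermitian mxstarD => -> ->. Qed.
Lemma herm_sub X Y : hermitian X -> hermitian Y -> hermitian (X - Y : Mx).
Proof. by rewrite /hermitian mxstarB => -> ->. Qed.
Lemma herm_scale (r : R) X : hermitian X -> hermitian (rC r *: X : Mx).
Proof. by rewrite /hermitian mxstarZ cj_rC => ->. Qed.

Lemma mxleP X Y : hermitian X -> hermitian Y ->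
  (forall x, Re (qform X x) <= Re (qform Y x)) -> mxle X Y.
Proof.
move=> hX hY h; split; first exact: herm_sub.
move=> x; rewrite qformB (qform_real_herm x hX) (qform_real_herm x hY) -rCB.
by rewrite -rC0 lec_rC subr_ge0.
Qed.
Lemma psd_qform X x : psd X -> qform X x = rC (Re (qform X x)) /\ 0 <= Re (qform X x).
Proof.
case=> hX h; split; first exact: qform_real_herm.
by have := h x; rewrite lec0E => /andP[_].
Qed.
End MxBasics.
Section Norms.
Variable R : realType.
Local Notation C := R[i].
Local Notation Re := (@complex.Re R).
Local Notation Im := (@complex.Im R).
Local Notation cj := (@conjc R).
Local Notation nc := (@Normc.normc R).

Lemma le_sq (a b : R) : 0 <= a -> 0 <= b -> a ^+ 2 <= b ^+ 2 -> a <= b.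
Proof. by move=> a0 b0; rewrite ler_sqr. Qed.
Lemma le_sq' (a b : R) : 0 <= a -> a <= b -> a ^+ 2 <= b ^+ 2.
Proof. move=> a0 ab; rewrite ler_sqr //; exact: le_trans ab. Qed.

Lemma CS (I : finType) (a b : I -> R) :
  \sum_i a i * b i <= Num.sqrt (\sum_i a i ^+ 2) * Num.sqrt (\sum_i b i ^+ 2).
Proof.
set A := \sum_i a i ^+ 2; set B := \sum_i b i ^+ 2.
have A0 : 0 <= A by apply: sumr_ge0 => i _; exact: sqr_ge0.
have B0 : 0 <= B by apply: sumr_ge0 => i _; exact: sqr_ge0.
set al := Num.sqrt A; set be := Num.sqrt B.
have al0 : 0 <= al by exact: sqrtr_ge0.
have be0 : 0 <= be by exact: sqrtr_ge0.
have alA : al ^+ 2 = A by rewrite sqr_sqrtr.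
have beB : be ^+ 2 = B by rewrite sqr_sqrtr.
have [al_eq0|al_gt0] := eqVneq al 0.
  have hA : A = 0 by rewrite -alA al_eq0 expr0n.
  have h := psumr_eq0P (fun i _ => sqr_ge0 (a i)) hA.
  rewrite big1 ?mulr_ge0 // => i _.
  by have /eqP := h i isT; rewrite sqrf_eq0 => /eqP ->; rewrite mul0r.
have [be_eq0|be_gt0] := eqVneq be 0.
  have hB : B = 0 by rewrite -beB be_eq0 expr0n.
  have h := psumr_eq0P (fun i _ => sqr_ge0 (b i)) hB.
  rewrite big1 ?mulr_ge0 // => i _.
  by have /eqP := h i isT; rewrite sqrf_eq0 => /eqP ->; rewrite mulr0.
have ab0 : 0 < al * be by rewrite mulr_gt0 // lt0r ?al_gt0 ?be_gt0.
have key : 2%:R * (al * be) * \sum_i a i * b i <= 2%:R * (al * be) * (al * be).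
  rewrite mulr_sumr.
  have -> : 2%:R * (al * be) * (al * be) = \sum_i (be ^+ 2 * a i ^+ 2 + al ^+ 2 * b i ^+ 2).
    rewrite big_split /= -!mulr_sumr -/A -/B -alA -beB; ring.
  apply: ler_sum => i _.
  have := sqr_ge0 (be * a i - al * b i); nra.
rewrite ler_pM2l in key; first by [].
by rewrite mulr_gt0 // ltr0n.
Qed.
Lemma sq_sum_ge0 (I : finType) (a : I -> R) : 0 <= \sum_i a i ^+ 2.
Proof. by apply: sumr_ge0 => i _; exact: sqr_ge0. Qed.

Variable n : nat.
Local Notation Mx := 'M[C]_n.
Local Notation cv := 'cV[C]_n.
Implicit Types (X Y : Mx) (x u v : cv).

Lemma vnormE v : vnorm v = Num.sqrt (\sum_i nc (v i 0) ^+ 2).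
Proof. by rewrite /vnorm; congr Num.sqrt; apply: eq_bigr => i _; rewrite normc_sq. Qed.
Lemma vnorm_entry v i : nc (v i 0) <= vnorm v.
Proof.
apply: le_sq; rewrite ?normc_ge0 ?vnorm_ge0 // vnorm_sq (bigD1 i) //= lerDl.
by apply: sumr_ge0 => j _; exact: sqr_ge0.
Qed.
Lemma vnorm0 : vnorm (0 : cv) = 0.
Proof.
rewrite vnormE big1 ?sqrtr0 // => i _; by rewrite mxE Normc.normc0 expr0n.
Qed.
Lemma vnorm_eq0 v : vnorm v = 0 -> v = 0.
Proof.
move=> h; apply/matrixP => i j; rewrite (ord1 j) mxE.
apply: Normc.eq0_normc; apply/eqP; rewrite eq_le normc_ge0 andbT -h.
exact: vnorm_entry.
Qed.
Lemma vnormZ c v : vnorm (c *: v) = nc c * vnorm v.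
Proof.
apply/eqP; rewrite -(@eqrXn2 _ 2) ?mulr_ge0 ?normc_ge0 ?vnorm_ge0 //.
rewrite exprMn !vnorm_sq mulr_sumr; apply/eqP/eq_bigr => i _.
by rewrite mxE Normc.normcM exprMn.
Qed.
Lemma vnormN v : vnorm (- v) = vnorm v.
Proof.
rewrite -scaleN1r vnormZ.
have -> : nc (-1) = 1 by rewrite normcN Normc.normc1.
by rewrite mul1r.
Qed.
Lemma vnormD u v : vnorm (u + v) <= vnorm u + vnorm v.
Proof.
apply: le_sq; rewrite ?addr_ge0 ?vnorm_ge0 //.
rewrite sqrrD !vnorm_sq.
have h1 : \sum_i nc ((u + v) i 0) ^+ 2 <= \sum_i (nc (u i 0) + nc (v i 0)) ^+ 2.
  apply: ler_sum => i _; apply: le_sq'; rewrite ?normc_ge0 // mxE; exact: le_normcD.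
apply: (le_trans h1).
have -> : \sum_i (nc (u i 0) + nc (v i 0)) ^+ 2 = \sum_i nc (u i 0) ^+ 2 +
    \sum_i nc (v i 0) ^+ 2 + (\sum_i nc (u i 0) * nc (v i 0)) *+ 2.
  rewrite -mulr_natr mulr_suml -!big_split /=; apply: eq_bigr => i _; ring.
rewrite [X in _ <= X]addrAC lerD2l lerMn2r /=.
by rewrite !vnormE; exact: CS.
Qed.

Definition Kb (B : 'I_n -> 'I_n -> R) := Num.sqrt (\sum_i (\sum_j B i j) ^+ 2).
Lemma Kb_ge0 B : 0 <= Kb B. Proof. exact: sqrtr_ge0. Qed.
Lemma vnorm_mul_le X B v : (forall i j, nc (X i j) <= B i j) ->
  vnorm (X *m v) <= Kb B * vnorm v.
Proof.
move=> hB; apply: le_sq; rewrite ?mulr_ge0 ?Kb_ge0 ?vnorm_ge0 //.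
rewrite exprMn [vnorm (X *m v) ^+ 2]vnorm_sq /Kb sqr_sqrtr ?sq_sum_ge0 // mulr_suml.
apply: ler_sum => i _; rewrite -exprMn; apply: le_sq'; first exact: normc_ge0.
rewrite mxE (le_trans (normc_sum _ _ _)) // mulr_suml; apply: ler_sum => j _.
rewrite Normc.normcM; apply: ler_pM; rewrite ?normc_ge0 //; exact: vnorm_entry.
Qed.

Definition opset X := [set vnorm (X *m x) | x in [set x | vnorm x <= 1]].
Lemma opset_ne X : opset X !=set0.
Proof. by exists (vnorm (X *m 0)), 0 => //=; rewrite vnorm0. Qed.
Lemma opset_ub X : has_ubound (opset X).
Proof.
exists (Kb (fun i j => nc (X i j))) => _ [x /= x1 <-].
apply: (le_trans (vnorm_mul_le x (fun i j => lexx _))).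
by rewrite ler_piMr ?Kb_ge0.
Qed.
Lemma opnorm_ge X x : vnorm x <= 1 -> vnorm (X *m x) <= opnorm X.
Proof. by move=> h; rewrite -[opnorm X]/(sup (opset X)); apply: (ub_le_sup (opset_ub X)); exists x. Qed.
Lemma opnorm_ge0 X : 0 <= opnorm X.
Proof. by rewrite -vnorm0 -(mulmx0 _ X); apply: opnorm_ge; rewrite vnorm0. Qed.
Lemma opnorm_le X b : (forall x, vnorm x <= 1 -> vnorm (X *m x) <= b) -> opnorm X <= b.
Proof. by move=> h; rewrite -[opnorm X]/(sup (opset X)); apply: (ge_sup (opset_ne X)) => _ [x /= x1 <-]; exact: h. Qed.
Lemma opnorm_le_Kb X B : (forall i j, nc (X i j) <= B i j) -> opnorm X <= Kb B.
Proof.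
move=> hB; apply: opnorm_le => x x1; apply: (le_trans (vnorm_mul_le x hB)).
by rewrite ler_piMr ?Kb_ge0.
Qed.
Lemma opnorm_vec X v : vnorm (X *m v) <= opnorm X * vnorm v.
Proof.
have [v0|vn0] := eqVneq (vnorm v) 0.
  by rewrite (vnorm_eq0 v0) mulmx0 vnorm0 mulr0.
have vp : 0 < vnorm v by rewrite lt0r vn0 vnorm_ge0.
have := @opnorm_ge X (rC (vnorm v)^-1 *: v).
rewrite vnormZ normc_rC ger0_norm ?invr_ge0 ?vnorm_ge0 // mulVf // lexx => /(_ isT).
rewrite -scalemxAr vnormZ normc_rC ger0_norm ?invr_ge0 ?vnorm_ge0 //.
by rewrite mulrC ler_pdivrMr // mulrC.
Qed.
Lemma vnorm_delta (j : 'I_n) : vnorm (delta_mx j 0 : cv) = 1.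
Proof.
rewrite vnormE (bigD1 j) //= big1 => [|i ij]; last first.
  by rewrite mxE (negPf ij) /= expr0n addr0 sqrtr0 expr0n.
by rewrite mxE !eqxx andbT mulr1n Normc.normc1 expr1n addr0 sqrtr1.
Qed.
Lemma opnorm_entry X i j : nc (X i j) <= opnorm X.
Proof.
have := @opnorm_ge X (delta_mx j 0); rewrite vnorm_delta lexx => /(_ isT).
apply: le_trans; rewrite -colE.
have -> : X i j = (col j X) i 0 by rewrite mxE.
exact: vnorm_entry.
Qed.
Lemma opnormD X Y : opnorm (X + Y) <= opnorm X + opnorm Y.
Proof.
apply: opnorm_le => x x1; rewrite mulmxDl (le_trans (vnormD _ _)) //.
apply: lerD; apply: (le_trans (opnorm_vec _ _)); by rewrite ler_piMr ?opnorm_ge0.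
Qed.
Lemma opnormN X : opnorm (- X) = opnorm X.
Proof.
have h : forall Y, opnorm (- Y) <= opnorm Y.
  move=> Y; apply: opnorm_le => x x1; rewrite mulNmx vnormN.
  exact: opnorm_ge.
by apply/eqP; rewrite eq_le h /= -{1}(opprK X) h.
Qed.
Lemma opnorm_scalar c : opnorm (c%:M : Mx) <= nc c.
Proof.
apply: opnorm_le => x x1; rewrite mul_scalar_mx vnormZ.
by rewrite ler_piMr ?normc_ge0.
Qed.

Lemma opnormS_ub (S : {linear Mx -> Mx}) X : opnorm X <= 1 -> opnorm (S X) <= opnormS S.
Proof.
move=> X1; apply: ub_le_sup; last by exists X.
pose B k l := \sum_i \sum_j nc (S (delta_mx i j) k l).
exists (Kb B) => _ [Y /= Y1 <-]; apply: opnorm_le_Kb => k l.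
rewrite {1}(matrix_sum_delta Y) linear_sum summxE (le_trans (normc_sum _ _ _)) //.
apply: ler_sum => i _; rewrite linear_sum summxE (le_trans (normc_sum _ _ _)) //.
apply: ler_sum => j _; rewrite linearZ mxE Normc.normcM.
rewrite ler_piMl ?normc_ge0 //; exact: le_trans (opnorm_entry _ _ _) Y1.
Qed.
End Norms.
Section MDE.
Variable R : realType.
Local Notation C := R[i].
Local Notation Re := (@complex.Re R).
Local Notation Im := (@complex.Im R).
Local Notation cj := (@conjc R).
Local Notation nc := (@Normc.normc R).
Variable n : nat.
Local Notation Mx := 'M[C]_n.
Local Notation cv := 'cV[C]_n.
Implicit Types (X Y : Mx) (x u v : cv).

Lemma qform_bound X x :
  nc (qform X x) <= (\sum_k \sum_i nc (X i k)) * vnorm x ^+ 2.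
Proof.
rewrite /qform mxE (le_trans (normc_sum _ _ _)) // mulr_suml.
apply: ler_sum => k _; rewrite mxE Normc.normcM mulr_suml.
have hk := vnorm_entry x k.
apply: (le_trans (ler_wpM2r (normc_ge0 _) (normc_sum _ _ _))).
rewrite mulr_suml; apply: ler_sum => i _.
rewrite mxE Normc.normcM mxE normc_cj.
rewrite [_ * nc (X i k)]mulrC -mulrA expr2; apply: ler_wpM2l; first exact: normc_ge0.
by apply: ler_pM; rewrite ?normc_ge0 ?vnorm_entry.
Qed.

Lemma psd1 : psd (1%:M : Mx).
Proof.
split; first by rewrite -rC1; exact: herm_rC_scalar.
by move=> x; rewrite qform1 -rC0 lec_rC sqr_ge0.
Qed.

Lemma S_herm (S : {linear Mx -> Mx}) : (forall X, psd X -> psd (S X)) ->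
  forall H, hermitian H -> hermitian (S H).
Proof.
move=> Spos H hH.
set c := \sum_k \sum_i nc (H i k).
have hc : psd (H + (rC c)%:M).
  split; first by apply: herm_add => //; exact: herm_rC_scalar.
  move=> x; rewrite qformD qform_scalar (qform_real_herm x hH) -rCM -rCD -rC0 lec_rC.
  have := qform_bound H x; rewrite (qform_real_herm x hH) normc_rC -/c.
  move=> h; have h2 : - Re (qform H x) <= `|Re (qform H x)| by rewrite -normrN ler_norm.
  lra.
have -> : S H = S (H + (rC c)%:M) - rC c *: S (1%:M).
  by rewrite -linearZ linearD /= scalemx1 addrK.
apply: herm_sub; first by case: (Spos _ hc).
by apply: herm_scale; case: (Spos _ psd1).
Qed.

Lemma M_decomp (M : Mx) : M = rC (2%:R^-1) *: (M + mxstar M) + iC R *: ImM M.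
Proof.
apply/matrixP => i j; rewrite !mxE.
set a := M i j; set s := mxstar M i j.
have i0 : iC R != 0.
  apply/negP => /eqP h.
  by have := congr1 (@complex.Im R) h; rewrite /= => /eqP; rewrite oner_eq0.
have -> : rC (2%:R^-1) = (2%:R^-1 : C).
  by rewrite -[rC _]/(real_complex R _) fmorphV rmorph_nat.
by field.
Qed.

Lemma Im_qform_S (S : {linear Mx -> Mx}) (M : Mx) y :
  (forall X, psd X -> psd (S X)) -> psd (ImM M) -> 0 <= Im (qform (S M) y).
Proof.
move=> Spos hIm.
have hH1 : hermitian (rC (2%:R^-1) *: (M + mxstar M)).
  apply: herm_scale; by rewrite /hermitian mxstarD mxstarK addrC.
rewrite {1}(M_decomp M) linearD qformD.
rewrite (qform_real_herm y (S_herm Spos hH1)) ImD Im_rC add0r linearZ qformZ.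
have [-> h0] := psd_qform y (Spos _ hIm).
by rewrite ImMul /= mul0r add0r mul1r.
Qed.

Lemma MDE_lower (A : Mx) (S : {linear Mx -> Mx}) (M : Mx) (z : C) x :
  data_pair A S -> M \in unitmx -> - invmx M = z%:M - A + S M ->
  psd (ImM M) -> Im z * vnorm (M *m x) ^+ 2 <= Im (qform M x).
Proof.
move=> [hA [_ Spos]] Mu hW hIm.
set y := M *m x.
have xy : x = invmx M *m y by rewrite /y mulKmx.
have -> : qform M x = cj (qform (invmx M) y).
  by rewrite -qform_star /qform -mxstarM -xy /y mulmxA.
rewrite Im_cj -ImN -qformN hW qformD qformB qform_scalar ImD ImB ImMul Im_rC Re_rC mulr0 add0r.
rewrite -addrA lerDl.
apply: addr_ge0; last exact: Im_qform_S.
case: hA => _ /(_ y); rewrite add0r qformN qform_ImM -rCN -rC0 lec_rC.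
by [].
Qed.
End MDE.
Section PsdZero.
Variable R : realType.
Local Notation C := R[i].
Local Notation Re := (@complex.Re R).
Local Notation Im := (@complex.Im R).
Local Notation cj := (@conjc R).
Local Notation nc := (@Normc.normc R).
Variable n : nat.
Local Notation Mx := 'M[C]_n.
Local Notation cv := 'cV[C]_n.
Implicit Types (X Y P : Mx) (x u v w : cv).

Lemma dotvDl u v w : dotv (u + v) w = dotv u w + dotv v w.
Proof. by rewrite /dotv mxstarD mulmxDl mxE. Qed.
Lemma dotvDr u v w : dotv u (v + w) = dotv u v + dotv u w.
Proof. by rewrite /dotv mulmxDr mxE. Qed.
Lemma dotvZl (c : C) u w : dotv (c *: u) w = cj c * dotv u w.
Proof. by rewrite /dotv mxstarZ -scalemxAl mxE. Qed.
Lemma dotvZr (c : C) u w : dotv u (c *: w) = c * dotv u w.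
Proof. by rewrite /dotv -scalemxAr mxE. Qed.

Lemma herm_dotv P u v : hermitian P -> dotv v (P *m u) = cj (dotv u (P *m v)).
Proof.
move=> hP; rewrite cj_dotv /dotv mxstarM hP mulmxA //.
Qed.

Lemma psd_off P u v : psd P -> qform P u = 0 -> dotv u (P *m v) = 0.
Proof.
move=> [hP hpos] hu.
set b := dotv u (P *m v).
have hvu : dotv v (P *m u) = cj b by rewrite herm_dotv.
have [hp hp0] := psd_qform v (conj hP hpos).
set p := Re (qform P v) in hp hp0.
set s := (1 + p)^-1.
have s0 : 0 < s by rewrite invr_gt0; lra.
have sp : s * p <= 1.
  rewrite /s mulrC ler_pdivrMr; lra.
set t : C := - rC s * cj b.
have E : qform P (u + t *: v) = t * b + cj t * cj b + cj t * t * rC p.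
  rewrite qformE mulmxDr -scalemxAr !dotvDl !dotvDr !dotvZl !dotvZr -!qformE hu hvu.
  rewrite -/b hp; ring.
have := hpos (u + t *: v); rewrite E lec0E => /andP[_].
rewrite /t; clear E hvu t; clearbody b; case: b => b1 b2 /=.
rewrite /= => h.
suff hb : b1 ^+ 2 + b2 ^+ 2 <= 0.
  have h1 := sqr_ge0 b1; have h2 := sqr_ge0 b2.
  have e1 : b1 ^+ 2 = 0 by lra.
  have e2 : b2 ^+ 2 = 0 by lra.
  move/eqP: e1; rewrite sqrf_eq0 => /eqP ->.
  by move/eqP: e2; rewrite sqrf_eq0 => /eqP ->.
set N := b1 ^+ 2 + b2 ^+ 2.
have N0 : 0 <= N by rewrite addr_ge0 ?sqr_ge0.
have h' : 0 <= s * (s * p * N - 2%:R * N).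
  move: h; match goal with |- is_true (0 <= ?E) -> _ =>
    have -> : E = s * (s * p * N - 2%:R * N) by rewrite /N; ring end; done.
have h'' : 0 <= s * p * N - 2%:R * N.
  by move: h'; rewrite pmulr_rge0.
have : s * p * N <= N by rewrite ler_piMl.
lra.
Qed.
End PsdZero.
Section PsdTrace.
Variable R : realType.
Local Notation C := R[i].
Local Notation Re := (@complex.Re R).
Local Notation Im := (@complex.Im R).
Local Notation cj := (@conjc R).
Variable n : nat.
Local Notation Mx := 'M[C]_n.
Local Notation cv := 'cV[C]_n.
Implicit Types (X Y P : Mx) (x u v w : cv).

Lemma mxstar_delta (i : 'I_n) : mxstar (delta_mx i 0 : cv) = delta_mx 0 i.
Proof.
apply/matrixP => a b; rewrite mxstarE !mxE (ord1 a) !eqxx andbT /=.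
by rewrite conjc_nat.
Qed.
Lemma dotv_delta P i j : dotv (delta_mx i 0) (P *m delta_mx j 0) = P i j.
Proof. by rewrite /dotv mxstar_delta -rowE -colE !mxE. Qed.
Lemma qform_delta P i : qform P (delta_mx i 0) = P i i.
Proof. by rewrite qformE dotv_delta. Qed.

Lemma psd_tr0 P : psd P -> Re (\tr P) <= 0 -> forall x, qform P x = 0.
Proof.
move=> hP htr.
have hd : forall i, 0 <= Re (P i i).
  by move=> i; have [_ h] := psd_qform (delta_mx i 0) hP; rewrite qform_delta in h.
have hs : \sum_i Re (P i i) = 0.
  apply/eqP; rewrite eq_le; apply/andP; split.
    by rewrite -Re_sum; exact: htr.
  by apply: sumr_ge0 => i _; exact: hd.
have hz : forall i, P i i = 0.
  move=> i; have [e _] := psd_qform (delta_mx i 0) hP; rewrite qform_delta in e.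
  by have := psumr_eq0P (fun i _ => hd i) hs => /(_ i isT) h0; rewrite e h0.
have P0 : P = 0.
  apply/matrixP => i j; rewrite mxE -dotv_delta; apply: psd_off => //.
  by rewrite qform_delta hz.
by move=> x; rewrite P0 /qform mulmx0 mul0mx mxE.
Qed.
End PsdTrace.
Section Meas.
Variable R : realType.
Local Notation C := R[i].
Local Notation Re := (@complex.Re R).
Local Notation Im := (@complex.Im R).
Variable n : nat.
Local Notation Mx := 'M[C]_n.
Local Notation cv := 'cV[C]_n.
Variable V : set R -> Mx.

Lemma natV_rC : ((n%:R)^-1 : C) = rC (n%:R^-1).
Proof. by rewrite -[rC _]/(real_complex R _) fmorphV rmorph_nat. Qed.

Lemma rho_le0 B : (0 < n)%N -> rho_meas V B <= 0 -> Re (\tr (V B)) <= 0.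
Proof.
move=> n0; rewrite /rho_meas /mxavg natV_rC ReMul Re_rC Im_rC mul0r subr0.
by rewrite pmulr_rle0 // invr_gt0 ltr0n.
Qed.

Lemma itv_set (a b : R) : [set s | a < s < b] = `]a, b[%classic.
Proof. by apply/seteqP; split => s /=; rewrite in_itv. Qed.

Lemma null_out (x : cv) (mu : {measure set R -> \bar R}) : (0 < n)%N ->
  (forall B, measurable B -> psd (V B) /\ Im (qform (V B) x) = 0 /\
       mu B = (Re (qform (V B) x))%:E) ->
  mu.-negligible (~` supp_rho V).
Proof.
move=> n0 hmu.
pose F (k : nat) : set R := match unpickle k with
  | Some pq => [set t | ratr pq.1 < t < ratr pq.2 /\
                        mu `]ratr pq.1, ratr pq.2[%classic = 0%E]
  | None => set0 end.
have hF : forall k, mu.-negligible (F k).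
  move=> k; rewrite /F; case: (unpickle k) => [[p q]|]; last first.
    exists set0; split; [by [] | exact: measure0 | by []].
  have [h0|h0] := pselect (mu `]ratr p, ratr q[%classic = 0%E).
    exists `]ratr p, ratr q[%classic; split; [exact: measurable_itv | exact: h0 |].
    by move=> t /= [pt _]; rewrite in_itv.
  exists set0; split; [by [] | exact: measure0 | by move=> t /= [_ h]].
apply: (negligibleS _ (negligible_bigcup hF)) => t /= nt.
have [e [e0 he]] : exists e : R, 0 < e /\ ~ (0 < rho_meas V [set s | t - e < s < t + e]).
  apply: contrapT => hn; apply: nt => e e0; apply: contrapT => hn'.
  by apply: hn; exists e.
set B := [set s | t - e < s < t + e].
have mB : measurable B by rewrite /B itv_set; exact: measurable_itv.
have [hpsd [_ hmuB]] := hmu B mB.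
have hB0 : mu B = 0%E.
  rewrite hmuB (psd_tr0 hpsd) // rho_le0 //.
  by move: he; rewrite leNgt => /negP.
have [p] := @rat_in_itvoo R (t - e) t ltac:(lra).
rewrite in_itv /= => /andP[p1 p2].
have [q] := @rat_in_itvoo R t (t + e) ltac:(lra).
rewrite in_itv /= => /andP[q1 q2].
exists (pickle (p, q)); first by [].
rewrite /F pickleK; split; first by rewrite p2 q1.
have hI : `]ratr p, ratr q[%classic `<=` B.
  move=> s /=; rewrite in_itv /= => /andP[s1 s2].
  apply/andP; split; lra.
apply/eqP; rewrite eq_le measure_ge0 andbT -hB0.
exact: (le_measure mu (mem_set (measurable_itv _)) (mem_set mB) hI).
Qed.
End Meas.
Section Cont.
Variable R : realType.
Lemma cont_f (a b : R) : 0 < b -> continuous (fun t : R => b / ((t - a) ^+ 2 + b ^+ 2)).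
Proof.
move=> b0 t.
have hb2 : 0 < b ^+ 2 by rewrite exprn_gt0.
have ht : 0 <= (t - a) ^+ 2 by rewrite sqr_ge0.
apply: (continuousM (s := fun=> b) (t := fun t => ((t - a) ^+ 2 + b ^+ 2)^-1)).
  exact: cst_continuous.
apply: (continuousV (s := fun t => ((t - a) ^+ 2 + b ^+ 2))).
  by rewrite gt_eqF // ltr_wpDl.
apply: (continuousD (f := fun t => (t - a) ^+ 2) (g := fun=> b ^+ 2)); last exact: cst_continuous.
have e : (fun t => (t - a) ^+ 2) = (fun t => t - a) \* (fun t => t - a).
  by apply: funext => s; rewrite /= expr2.
rewrite e; apply: continuousM; apply: (continuousB (f := id) (g := fun=> a)); (exact: cvg_id || exact: cst_continuous).
Qed.
End Cont.

Section Final.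
Variable R : realType.
Local Notation C := R[i].
Local Notation Re := (@complex.Re R).
Local Notation Im := (@complex.Im R).
Local Notation nc := (@Normc.normc R).
Variable n : nat.
Local Notation Mx := 'M[C]_n.
Local Notation cv := 'cV[C]_n.

Lemma supp_ne (V : set R -> Mx) (M : C -> Mx) : (0 < n)%N -> V setT = 1%:M ->
  matrix_measure_repr V M -> supp_rho V !=set0.
Proof.
move=> n0 hV hrep.
pose x : cv := delta_mx (Ordinal n0) 0.
have [mu [hmu _]] := hrep x.
have hT : mu setT = 1%:E.
  have [_ [_ ->]] := hmu setT measurableT.
  by rewrite hV qform1 vnorm_delta expr1n.
apply: contrapT => hne.
have hs : ~` supp_rho V = setT.
  by apply/seteqP; split => // t _ ht; apply: hne; exists t.
have [N [mN N0 sN]] := null_out n0 hmu.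
have : (mu setT <= mu N)%E.
  apply: (le_measure mu (mem_set measurableT) (mem_set mN)); by rewrite -hs.
by rewrite hT N0 lee_fin ler10.
Qed.

Lemma d_props (V : set R -> Mx) (z : C) : supp_rho V !=set0 -> 0 < Im z ->
  Im z <= d_rho V z /\ forall t, supp_rho V t -> d_rho V z <= nc (z - rC t).
Proof.
move=> [t0 ht0] hz; split.
  apply: lb_le_inf; first by exists (nc (z - rC t0)), t0.
  move=> _ [t _ <-]; apply: le_trans (Im_le_normc _).
  by rewrite ImB Im_rC subr0 ler_norm.
move=> t ht; apply: ge_inf; last by exists t.
by exists 0 => _ [s _ <-]; exact: normc_ge0.
Qed.

Lemma Im_cint (mu : {measure set R -> \bar R}) f :
  Im (cintegral mu f) = Rintegral mu setT (fun t => Im (f t)).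
Proof. by rewrite /cintegral ImD Im_rC add0r ImMul /= mul0r add0r mul1r. Qed.

Lemma f_eq (z : C) (t : R) : Im ((rC t - z)^-1) = Im z / ((t - Re z) ^+ 2 + Im z ^+ 2).
Proof. by rewrite ImV ImB ReB Re_rC Im_rC sub0r opprK sqrrN. Qed.

Lemma normc_sub_sq (z : C) (t : R) : nc (z - rC t) ^+ 2 = (t - Re z) ^+ 2 + Im z ^+ 2.
Proof. rewrite normc_sq ReB ImB Re_rC Im_rC subr0; congr (_ + _); ring. Qed.

Lemma int_bound (V : set R -> Mx) (M : C -> Mx) (z : C) (x : cv) :
  (0 < n)%N -> V setT = 1%:M -> matrix_measure_repr V M -> 0 < Im z ->
  Im (qform (M z) x) <= Im z / d_rho V z ^+ 2 * vnorm x ^+ 2.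
Proof.
move=> n0 hV hrep hz.
have hne := supp_ne n0 hV hrep.
have [hd hdt] := d_props hne hz.
set d := d_rho V z in hd hdt *.
have d0 : 0 < d by exact: lt_le_trans hd.
have [mu [hmu hM]] := hrep x.
rewrite hM // Im_cint.
set g := fun t => Im ((rC t - z)^-1).
have gE : g = fun t => Im z / ((t - Re z) ^+ 2 + Im z ^+ 2).
  by apply: funext => t; rewrite /g f_eq.
have g0 : forall t, 0 <= g t.
  move=> t; rewrite gE; apply: divr_ge0; [exact: ltW | by rewrite addr_ge0 ?sqr_ge0].
have mg : measurable_fun setT g.
  rewrite gE; apply: measurable_realfun.continuous_measurable_fun; exact: cont_f.
set c := Im z / d ^+ 2.
have c0 : 0 <= c by apply: divr_ge0; [exact: ltW | exact: sqr_ge0].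
have hmuT : mu setT = (vnorm x ^+ 2)%:E.
  by have [_ [_ ->]] := hmu setT measurableT; rewrite hV qform1 Re_rC.
have gc : forall t, supp_rho V t -> g t <= c.
  move=> t ht; rewrite gE -normc_sub_sq /c; apply: ler_wpM2l; first exact: ltW.
  have h1 := hdt t ht.
  have hN : 0 < nc (z - rC t) by exact: lt_le_trans h1.
  rewrite lef_pV2 ?posrE ?exprn_gt0 //.
  by apply: le_sq'; [exact: ltW | exact: h1].
have hle : (\int[mu]_(t in setT) (g t)%:E <= \int[mu]_(t in setT) (cst c%:E) t)%E.
  apply: ae_ge0_le_integral.
  - by [].
  - by move=> t _; rewrite lee_fin.
  - exact/measurable_realfun.measurable_EFinP.
  - by move=> t _; rewrite lee_fin.
  - exact: measurable_cst.
  - have := null_out n0 hmu; apply: negligibleS => t /= h ht; apply: h => _.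
    by rewrite lee_fin gc.
rewrite integral_cst // hmuT -EFinM in hle.
have hge : (0 <= \int[mu]_(t in setT) (g t)%:E)%E.
  by apply: integral_ge0 => t _; rewrite lee_fin.
rewrite /Rintegral -[c * _]/(fine (c * vnorm x ^+ 2)%:E); apply: fine_le => //.
by rewrite ge0_fin_numE // (le_lt_trans hle) // ltry.
Qed.
End Final.
Section OpS.
Variable R : realType.
Local Notation C := R[i].
Variable n : nat.
Local Notation Mx := 'M[C]_n.
Local Notation nc := (@Normc.normc R).

Lemma opnorm_SM (S : {linear Mx -> Mx}) (Y : Mx) : opnorm (S Y) <= opnormS S * opnorm Y.
Proof.
set m := opnorm Y.
have [m0|mn0] := eqVneq m 0.
  have -> : Y = 0.
    apply/matrixP => i j; rewrite mxE; apply: Normc.eq0_normc.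
    by apply/eqP; rewrite eq_le normc_ge0 andbT -m0 opnorm_entry.
  rewrite linear0 m0 mulr0; apply: opnorm_le => x _.
  by rewrite mul0mx vnorm0.
have mp : 0 < m by rewrite lt0r mn0 opnorm_ge0.
have mge : 0 <= m by exact: ltW.
have hY1 : opnorm (rC m^-1 *: Y) <= 1.
  apply: opnorm_le => x x1; rewrite -scalemxAl vnormZ normc_rC ger0_norm ?invr_ge0 //.
  rewrite mulrC ler_pdivrMr // mul1r.
  apply: le_trans (opnorm_vec _ _) _; by rewrite ler_piMr ?opnorm_ge0.
have hS := opnormS_ub S hY1.
have -> : S Y = rC m *: S (rC m^-1 *: Y).
  by rewrite linearZ scalerA -rCM mulfV // rC1 scale1r.
apply: opnorm_le => x x1; rewrite -scalemxAl vnormZ normc_rC ger0_norm //.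
rewrite mulrC ler_wpM2r //.
by apply: le_trans hS; apply: opnorm_ge.
Qed.
End OpS.

Theorem lemma3p4 (R : realType) (n : nat) (A : 'M[R[i]]_n)
    (S : {linear 'M[R[i]]_n -> 'M[R[i]]_n}) (M : R[i] -> 'M[R[i]]_n)
    (V : set R -> 'M[R[i]]_n) :
  (0 < n)%N ->
  data_pair A S ->
  solves_MDE A S M ->
  V setT = 1%:M ->
  matrix_measure_repr V M ->
  forall z : R[i], 0 < complex.Im z ->
    [/\ opnorm (M z) <= (d_rho V z)^-1,
        mxle (rC (complex.Im z * (opnorm (invmx (M z)))^-2))%:M (ImM (M z)),
        mxle (ImM (M z)) (rC (complex.Im z / d_rho V z ^+ 2))%:M,
        opnorm (invmx (M z)) <= Normc.normc z + opnorm A + opnormS S * opnorm (M z)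
      & rho_harm M z <= complex.Im z / (pi * d_rho V z ^+ 2)].
Proof.
move=> n0 hdp hMDE hV hrep z hz.
have [Mu hW hpd] := hMDE z hz.
have hpsdIm : psd (ImM (M z)).
  case: hpd => hh hpos; split => // x.
  have [->|x0] := eqVneq x 0; first by rewrite /qform mulmx0 mxE.
  exact: ltW (hpos x x0).
have hne := supp_ne n0 hV hrep.
have [hd _] := d_props hne hz.
set d := d_rho V z in hd *.
have d0 : 0 < d by exact: lt_le_trans hd.
have dge : 0 <= d by exact: ltW.
have hzge : 0 <= complex.Im z by exact: ltW.
have up : forall x, complex.Im (qform (M z) x) <= complex.Im z / d ^+ 2 * vnorm x ^+ 2.
  by move=> x; apply: int_bound.
have lo : forall x, complex.Im z * vnorm (M z *m x) ^+ 2 <= complex.Im (qform (M z) x).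
  by move=> x; exact: (@MDE_lower R n A S (M z) z x hdp Mu hW hpsdIm).
set c := complex.Im z / d ^+ 2.
have c0 : 0 <= c by apply: divr_ge0; [exact: ltW | exact: sqr_ge0].
split.
- apply: opnorm_le => x x1.
  have h := le_trans (lo x) (up x).
  have v2 : vnorm x ^+ 2 <= 1 by rewrite -(expr1n _ 2); apply: le_sq'; rewrite ?vnorm_ge0.
  have h2 : complex.Im z * vnorm (M z *m x) ^+ 2 <= complex.Im z * (d ^+ 2)^-1.
    apply: (le_trans h); rewrite -/c /c -mulrA ler_wpM2l //.
    by rewrite ler_piMr // invr_ge0 sqr_ge0.
  rewrite ler_pM2l // in h2.
  apply: le_sq; rewrite ?vnorm_ge0 ?invr_ge0 //.
  by rewrite exprVn.
- apply: mxleP; [exact: herm_rC_scalar | exact: herm_ImM |] => x.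
  rewrite qform_scalar qform_ImM Re_rC ReMul !Re_rC !Im_rC mulr0 subr0.
  set w := opnorm (invmx (M z)).
  have hx : vnorm x <= w * vnorm (M z *m x).
    by have := opnorm_vec (invmx (M z)) (M z *m x); rewrite mulmxA mulVmx // mul1mx.
  have [w0|wn0] := eqVneq w 0.
    rewrite w0 expr0n /= invr0 mulr0 mul0r.
    apply: le_trans (lo x); apply: mulr_ge0; [exact: ltW | exact: sqr_ge0].
  have wp : 0 < w by rewrite lt0r wn0 opnorm_ge0.
  apply: le_trans (lo x); rewrite -mulrA ler_wpM2l //.
  rewrite mulrC ler_pdivrMr ?exprn_gt0 // mulrC -exprMn.
  by apply: le_sq'; rewrite ?vnorm_ge0.
- apply: mxleP; [exact: herm_ImM | exact: herm_rC_scalar |] => x.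
  rewrite qform_scalar qform_ImM Re_rC ReMul !Re_rC !Im_rC mulr0 subr0.
  exact: up.
- have -> : invmx (M z) = - (z%:M - A + S (M z)) by rewrite -hW opprK.
  rewrite opnormN; apply: le_trans (opnormD _ _) _; apply: lerD; last exact: opnorm_SM.
  apply: le_trans (opnormD _ _) _; apply: lerD; first exact: opnorm_scalar.
  by rewrite opnormN.
- rewrite /rho_harm /mxavg natV_rC ReMul Re_rC Im_rC mul0r subr0.
  have htr : complex.Re (\tr (ImM (M z))) <= n%:R * c.
    rewrite /mxtrace Re_sum.
    apply: le_trans (ler_sum _ (fun i _ => (_ : _ <= c))) _.
      move=> i; rewrite -qform_delta qform_ImM Re_rC.
      by have := up (delta_mx i 0); rewrite vnorm_delta expr1n mulr1.
    by rewrite sumr_const card_ord mulr_natl.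
  have hn : (n%:R)^-1 * complex.Re (\tr (ImM (M z))) <= c.
    by rewrite mulrC ler_pdivrMr ?ltr0n // mulrC.
  rewrite [X in _ <= _ * X]invfM [X in _ <= X]mulrCA; apply: ler_wpM2l; last exact: hn.
  by rewrite invr_ge0 pi_ge0.
Qed.
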